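(* Let $A,W\in \mathbb{C}^{n\times n}$. Then $A^{\mathrm{cEP},W}=(A^{D,W})^2(A^{D,W})^{(1,3)_W}$.
   Context: $\mathbb{C}^{n\times n}$ carries the conjugate transpose involution. With $k=\max\{\mathrm{ind}(AW),\mathrm{ind}(WA)\}$, the weighted core-EP inverse $A^{\mathrm{cEP},W}$ is the unique $X$ with $WAWX=(WA)^k[(WA)^k]^{\dagger}$ and $\mathcal{R}(X)\subseteq\mathcal{R}((AW)^k)$. $A^{D,W}$ is the $W$-weighted Drazin inverse of $A$. A weighted $(1,3,W)$-inverse of $B$ is any $X$ with $B=BWXWB$ and $(WBWX)^*=WBWX$, denoted $B^{(1,3)_W}$. *)

(* Defs.v *)
(* Complex matrices are modelled over an arbitrary
   numClosedFieldType C (this includes the genuine complex numbers R[i],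
   R : realType), with conjugation Num.conj. *)
From HB Require Import structures.
From mathcomp Require Import all_boot all_order all_algebra.
Set Implicit Arguments. Unset Strict Implicit. Unset Printing Implicit Defensive.
Import Order.TTheory GRing.Theory Num.Theory.
Local Open Scope ring_scope.

Section Defs.
Variable C : numClosedFieldType.

Definition ctr (m n : nat) (M : 'M[C]_(m, n)) : 'M[C]_(n, m) :=
  (map_mx Num.conj M)^T.

Definition ind (n : nat) (M : 'M[C]_n) : nat :=
  find (fun k => \rank (M ^+ k) == \rank (M ^+ k.+1)) (iota 0 n.+1).

Definition is_MP (m n : nat) (M : 'M[C]_(m, n)) (X : 'M[C]_(n, m)) : Prop :=
  [/\ M *m X *m M = M, X *m M *m X = X,
      ctr (M *m X) = M *m X & ctr (X *m M) = X *m M].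

Definition is_WDrazin (n : nat) (A W X : 'M[C]_n) : Prop :=
  let k := ind (A *m W) in
  [/\ (A *m W) ^+ k.+1 *m X *m W = (A *m W) ^+ k,
      X *m W *m A *m W *m X = X &
      A *m W *m X = X *m W *m A].

Definition is_WcEP (n : nat) (A W X : 'M[C]_n) : Prop :=
  let k := maxn (ind (A *m W)) (ind (W *m A)) in
  (exists P, is_MP ((W *m A) ^+ k) P /\
             W *m A *m W *m X = (W *m A) ^+ k *m P) /\
  (exists Y, X = (A *m W) ^+ k *m Y).

Definition is_13W (n : nat) (B W X : 'M[C]_n) : Prop :=
  B = B *m W *m X *m W *m B /\ ctr (W *m B *m W *m X) = W *m B *m W *m X.

End Defs.

(* Main.v *)
Require Import Defs.
From HB Require Import structures.
From mathcomp Require Import all_boot all_order all_algebra.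
Import Order.TTheory GRing.Theory Num.Theory.
Local Open Scope ring_scope.

Lemma ind_rank (C : numClosedFieldType) n (M : 'M[C]_n) :
  \rank (M ^+ ind M) = \rank (M ^+ (ind M).+1).
Proof.
rewrite /ind.
set p := (fun k => _).
have H : has p (iota 0 n.+1).
  apply/negPn/negP => /hasPn Hn.
  have key : forall k, (k <= n.+1)%N -> (\rank (M ^+ k) + k <= n)%N.
    elim=> [|k IH] Hk.
      by rewrite expr0 addn0 rank_leq_col.
    have Hk' : (k < n.+1)%N by [].
    have := Hn k; rewrite mem_iota add0n Hk' /= => /(_ isT).
    rewrite /p => Hne.
    have Hle : (\rank (M ^+ k.+1) <= \rank (M ^+ k))%N.
      by rewrite exprS -mulmxE mxrankM_maxr.
    have := IH (ltnW Hk).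
    have Hlt : (\rank (M ^+ k.+1) < \rank (M ^+ k))%N.
      by rewrite ltn_neqAle Hle andbT eq_sym.
    move=> H2; rewrite addnS -addSn; exact: leq_trans (leq_add Hlt (leqnn k)) H2.
  by have := key n.+1 (leqnn _); rewrite addnS ltnNge leq_addl.
have := nth_find 0%N H.
have Hf : (find p (iota 0 n.+1) < n.+1)%N by rewrite -[X in (_ < X)%N](size_iota 0 n.+1) -has_find.
rewrite nth_iota ?add0n //.
by move/eqP.
Qed.

Lemma ind_fact (C : numClosedFieldType) n (M : 'M[C]_n) :
  exists T, M ^+ ind M = M ^+ (ind M).+1 * T.
Proof.
have Hr := @ind_rank _ _ M.
set k := ind M in Hr *.
have Hsub : (((M ^+ k.+1)^T) <= (M ^+ k)^T)%MS.
  by rewrite exprSr -mulmxE trmx_mul submxMl.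
have Hsub2 : (((M ^+ k)^T) <= (M ^+ k.+1)^T)%MS.
  have := mxrank_leqif_sup Hsub.
  by rewrite !mxrank_tr Hr => -[_ <-]; rewrite eqxx.
case/submxP: Hsub2 => T HT.
exists T^T; rewrite -mulmxE -[M ^+ k]trmxK HT trmx_mul trmxK.
by [].
Qed.
Lemma ctrM (C : numClosedFieldType) n (X Y : 'M[C]_n) :
  ctr (X * Y) = ctr Y * ctr X.
Proof. by rewrite /ctr -!mulmxE map_mxM trmx_mul. Qed.

Lemma exprXY (R : pzRingType) (x y : R) j : (x * y) ^+ j.+1 = x * (y * x) ^+ j * y.
Proof.
elim: j => [|j IH]; first by rewrite expr1 expr0 mulr1.
by rewrite exprS IH exprS !mulrA.
Qed.

Lemma pow_shift (R : pzRingType) (x t : R) i m : (i <= m)%N ->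
  x ^+ i = x ^+ i.+1 * t -> x ^+ m = x ^+ m.+1 * t.
Proof.
move=> Hm H; rewrite -(subnK Hm) -addnS !exprD H mulrA //.
Qed.

Lemma powcomm (R : pzRingType) (y x : R) : GRing.comm y x -> y = x * y * y ->
  forall j, y = x ^+ j * y ^+ j.+1.
Proof.
move=> cb WD1; elim=> [|j IH]; first by rewrite expr0 mul1r expr1.
have Hc : x * y ^+ j = y ^+ j * x.
  by have := commrX j (commr_sym cb); rewrite /GRing.comm.
rewrite {1}IH [y ^+ j.+1]exprSr.
have -> : y ^+ j * y = y ^+ j * (x * y * y) by rewrite -WD1.
rewrite mulrA -(mulrA _ _ (x * y * y)) !mulrA -(mulrA _ _ x) -Hc.
rewrite mulrA -exprSr -(mulrA _ (y ^+ j) y) -exprSr -mulrA -exprSr.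
by rewrite exprS mulrA.
Qed.

Theorem corollary4p5 (C : numClosedFieldType) (n : nat) (A W : 'M[C]_n)
    (E D Z : 'M[C]_n) :
  is_WcEP A W E -> is_WDrazin A W D -> is_13W D W Z ->
  E = D *m W *m D *m W *m Z.
Proof.
rewrite /is_WcEP /is_WDrazin /is_13W !mulmxE.
set ia := ind (A * W); set iw := ind (W * A); set m := maxn ia iw.
move=> [[P [[MP1 _ MP3 _] hE1]] [Y hE2]] [h1 h2 h3] [hZ1 hZ2].
rewrite !mulmxE in MP1 MP3 hE1 hE2 h1 h2 h3 hZ1 hZ2 *.
set a := A * W in h1 hE2 *; set b := W * A in MP1 MP3 hE1 *.
have cG : GRing.comm a (D * W).
  by rewrite /GRing.comm /a mulrA h3 !mulrA.
have h1' : a ^+ ia = a ^+ ia.+1 * (D * W) by rewrite mulrA h1.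
have haG : a ^+ m = D * W * a ^+ m.+1.
  rewrite (@pow_shift _ _ _ _ _ (leq_maxl ia iw) h1').
  by have := commrX m.+1 (commr_sym cG); rewrite /GRing.comm => ->.
have EQ : E = D * (b ^+ m * P).
  have HE : E = D * W * a * E by rewrite {1}hE2 haG exprS hE2 !mulrA.
  by rewrite {1}HE -hE1 /a /b !mulrA.
rewrite EQ -!mulrA; congr (D * _); rewrite !mulrA.
set Q := b ^+ m * P; set R := W * D * W * Z in hZ2 *.
have hQ : ctr Q = Q by [].
have QQ : Q * b ^+ m = b ^+ m by rewrite /Q MP1.
have cb : GRing.comm (W * D) b.
  by rewrite /GRing.comm /b -!mulrA [D * (W * A)]mulrA -h3 !mulrA.
have WD1 : W * D = b * (W * D) * (W * D).
  by rewrite -cb -{1}h2 !mulrA.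
have WDj := @powcomm _ _ _ cb WD1.
have QR : Q * R = R.
  by rewrite /R -!mulrA [W * (D * _)]mulrA (WDj m) !mulrA QQ.
have RWD : R * (W * D) = W * D.
  rewrite /R !mulrA; have := congr1 (fun M => W * M) hZ1.
  by rewrite !mulrA => <-.
have bm1 : b ^+ m.+1 = W * D * (W * a ^+ m.+1 * A).
  by rewrite exprXY haG /a /b !mulrA.
have [T HT] := @ind_fact _ _ b.
have bm : b ^+ m = b ^+ m.+1 * T := @pow_shift _ _ _ _ _ (leq_maxr ia iw) HT.
move: bm1; set X := W * a ^+ m.+1 * A => bm1.
clearbody R X.
have RM : R * b ^+ m = b ^+ m.
  by rewrite bm bm1 -mulrA mulrA RWD mulrA.
have RQ : R * Q = Q by rewrite /Q mulrA RM.
by rewrite -hZ2 -{1}QR ctrM hQ hZ2 RQ.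
Qed.
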